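(* Let $\delta\ge2$ be an integer, $n=4\delta+2$, and $q$ a prime power with $n\mid(q-1)$. Let $b$ be a positive integer with $\gcd(b,n)=1$ and $t\in\{0,\dots,n-1\}$. Put $$A=\{\alpha^{t},\alpha^{t+b},\alpha^{t+(\delta+1)b},\alpha^{t+(2\delta+1)b}\},\qquad B=\{1,\alpha^{b},\dots,\alpha^{(\delta-2)b}\}.$$ Then $C_{AB}$ is an optimal cyclic $(\delta+2,\delta)$-LRC over $\mathbb{F}_q$ with parameters $[4\delta+2,\ \delta+4,\ 2\delta]$.
   Context: Let $q$ be a prime power and $n\mid(q-1)$, so the set $R_n$ of all $n$-th roots of unity lies in $\mathbb{F}_q$; let $\alpha\in\mathbb{F}_q$ be a primitive $n$-th root of unity. For $A,B\subseteq R_n$, $AB=\{\beta\gamma:\beta\in A,\gamma\in B\}$, and for $Z\subseteq R_n$, $C_Z$ denotes the cyclic code of length $n$ over $\mathbb{F}_q$ with complete defining set $Z$, i.e. the ideal generated by $\prod_{\beta\in Z}(x-\beta)$ in $\mathbb{F}_q[x]/(x^n-1)$, identified with a subspace of $\mathbb{F}_q^n$; it has dimension $n-|Z|$. Locality: for a linear code $C\subseteq\mathbb{F}_q^n$ and integers $r\ge1$, $\delta\ge2$, the $i$-th coordinate has $(r,\delta)$-locality if there is $S_i\subseteq\{1,\dots,n\}$ with $i\in S_i$, $|S_i|\le r+\delta-1$ such that the punctured code $C|_{S_i}$ has minimum distance at least $\delta$; $C$ is an $(r,\delta)$-LRC if every coordinate has $(r,\delta)$-locality. An $[n,k,d]$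 $(r,\delta)$-LRC is optimal if $d=n-k-(\lceil k/r\rceil-1)(\delta-1)+1$ (this quantity is always an upper bound on $d$). *)

(* Defs.v *)
From HB Require Import structures.
From mathcomp Require Import all_boot all_order all_algebra all_field.
Set Implicit Arguments. Unset Strict Implicit. Unset Printing Implicit Defensive.
Import GRing.Theory.
Local Open Scope ring_scope.

Section Codes.
Variable F : finFieldType.

Definition gen_poly (Z : {set F}) : {poly F} := \prod_(z in Z) ('X - z%:P).

(* the cyclic code C_Z of length n: the ideal generated by gen_poly Z in
   F[x]/(x^n - 1), a word c being identified with c_0 + c_1 x + ... + c_{n-1} x^{n-1} *)
Definition cyclic_code (n : nat) (Z : {set F}) (c : 'rV[F]_n) : Prop :=
  exists h : {poly F}, rVpoly c = (gen_poly Z * h) %% ('X^n - 1).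

Definition wt (n : nat) (c : 'rV[F]_n) : nat := #|[set i | c ord0 i != 0]|.

Definition code_dim (n : nat) (C : 'rV[F]_n -> Prop) (k : nat) : Prop :=
  exists V : {vspace 'rV[F]_n}, (forall c, C c <-> c \in V) /\ \dim V = k.

Definition min_dist (n : nat) (C : 'rV[F]_n -> Prop) (d : nat) : Prop :=
  (exists c, [/\ C c, c != 0 & wt c = d]) /\
  (forall c, C c -> c != 0 -> (d <= wt c)%N).

(* the i-th coordinate has (r, delta)-locality: the punctured code C|_S
   has minimum distance >= delta, i.e. every codeword nonzero on S has at
   least delta nonzero coordinates in S *)
Definition has_locality (n : nat) (C : 'rV[F]_n -> Prop) (r delta : nat) (i : 'I_n) : Prop :=
  exists S : {set 'I_n}, [/\ i \in S, (#|S| <= r + delta - 1)%N &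
    forall c, C c -> [exists j in S, c ord0 j != 0%R] ->
      (delta <= #|[set j in S | c ord0 j != 0%R]|)%N].

Definition is_LRC (n : nat) (C : 'rV[F]_n -> Prop) (r delta : nat) : Prop :=
  forall i : 'I_n, has_locality C r delta i.

End Codes.

(* Singleton-like bound attained: d = n - k - (ceil(k/r) - 1)(delta - 1) + 1 *)
Definition LRC_optimal_params (n k d r delta : nat) : Prop :=
  (d%:Z = n%:Z - k%:Z - ((((k + r - 1) %/ r)%N)%:Z - 1) * (delta%:Z - 1) + 1)%R.

(* Main.v *)
From HB Require Import structures.
From mathcomp Require Import all_boot all_order all_algebra all_field zify.
Require Import Defs.
Set Implicit Arguments. Unset Strict Implicit. Unset Printing Implicit Defensive.
Import GRing.Theory.
Local Open Scope ring_scope.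


Lemma horner_rVpoly_sum (R : comNzRingType) d (c : 'rV[R]_d) (z : R) :
  (rVpoly c).[z] = \sum_(i < d) c 0 i * z ^+ i.
Proof.
rewrite /rVpoly horner_poly; apply: eq_bigr => i _.
by rewrite valK.
Qed.

Lemma sum_split2 (R : nmodType) m (f : nat -> R) :
  \sum_(i < m.*2) f i = \sum_(a < m) f (a.*2) + \sum_(a < m) f (a.*2.+1).
Proof.
elim: m => [|m IH]; first by rewrite !big_ord0 addr0.
rewrite doubleS !big_ord_recr /= IH.
by rewrite -!addrA; congr (_ + _); rewrite addrCA.
Qed.

Lemma BCH0 (F : fieldType) (I : finType) (x w : I -> F) :
  {in [set i | w i != 0%R] &, injective x} ->
  (forall l, (l < #|[set i | w i != 0%R]|)%N -> \sum_i w i * x i ^+ l = 0) ->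
  forall i, w i = 0.
Proof.
set P := [set i | w i != 0%R] => injx hs i0.
apply/eqP/negPn/negP => wi0.
have i0P : i0 \in P by rewrite inE.
pose q := \prod_(j in P :\ i0) ('X - (x j)%:P).
have sq : size q = #|P|.
  by rewrite /q -big_enum size_prod_XsubC -cardE (cardsD1 i0 P) i0P.
have h1 : \sum_i w i * q.[x i] = 0.
  transitivity (\sum_i \sum_(l < size q) q`_l * (w i * x i ^+ l)).
    apply: eq_bigr => i _; rewrite horner_coef mulr_sumr.
    by apply: eq_bigr => l _; rewrite mulrCA.
  rewrite exchange_big big1 // => l _; rewrite -mulr_sumr hs ?mulr0 //.
  by rewrite -sq.
have h2 : \sum_i w i * q.[x i] = w i0 * q.[x i0].
  rewrite (bigD1 i0) //= big1 ?addr0 // => i ni0.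
  case: (boolP (i \in P)) => iP; last first.
    by move: iP; rewrite inE negbK => /eqP ->; rewrite mul0r.
  have iP' : i \in P :\ i0 by rewrite in_setD1 ni0 iP.
  by rewrite /q (bigD1 i iP') /= hornerM hornerXsubC subrr mul0r mulr0.
have qn : q.[x i0] != 0.
  rewrite /q horner_prod prodf_seq_neq0; apply/allP => j _.
  apply/implyP; rewrite !inE => /andP [nj jP].
  rewrite !hornerE subr_eq0; apply/negP => /eqP xe.
  by move/eqP: nj; apply; apply: injx; rewrite ?inE.
by move: h1; rewrite h2 => /eqP; rewrite mulf_eq0 (negbTE wi0) (negbTE qn).
Qed.

Lemma BCHk (F : fieldType) (I : finType) (x w : I -> F) k i0 :
  {in [set i | w i != 0%R] &, injective x} ->
  (forall l, (l < k)%N -> \sum_i w i * x i ^+ l = 0) ->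
  w i0 != 0 -> (k < #|[set i | w i != 0%R]|)%N.
Proof.
move=> injx hs wi0; rewrite ltnNge; apply/negP => hk.
move/eqP: wi0; apply; apply: (@BCH0 _ _ x) => // l hl; apply: hs.
exact: leq_trans hl hk.
Qed.


Definition mulg_map (R : comNzRingType) k d (g : {poly R}) (v : 'rV[R]_k) : 'rV[R]_d :=
  poly_rV (g * rVpoly v).

Lemma mulg_map_semilinear (R : comNzRingType) k d (g : {poly R}) :
  semilinear (@mulg_map R k d g).
Proof.
split=> [a u|u v]; rewrite /mulg_map.
  by rewrite linearZ /= -scalerAr linearZ.
by rewrite linearD /= mulrDr linearD.
Qed.
HB.instance Definition _ (R : comNzRingType) k d g :=
  GRing.isSemilinear.Build R 'rV_k 'rV_d _ (@mulg_map R k d g)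
  (mulg_map_semilinear k d g).

Section GenCode.
Variables (F : finFieldType) (n k : nat) (Z : {set F}).
Hypothesis hZ : forall z, z \in Z -> z ^+ n = 1.
Hypothesis hcard : (#|Z| + k = n)%N.
Hypothesis n_gt0 : (0 < n)%N.

Let g := gen_poly Z.

Lemma size_g : size g = #|Z|.+1.
Proof. by rewrite /g /gen_poly -big_enum size_prod_XsubC cardE. Qed.

Lemma g_neq0 : g != 0.
Proof. by rewrite -size_poly_eq0 size_g. Qed.

Lemma size_rVpoly_le d (v : 'rV[F]_d) : (size (rVpoly v) <= d)%N.
Proof. exact: size_poly. Qed.

Lemma size_gp (v : 'rV[F]_k) : (size (g * rVpoly v)%R <= n)%N.
Proof.
apply: leq_trans (size_mul_leq _ _) _; rewrite size_g /=.
by rewrite -hcard leq_add2l size_rVpoly_le.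
Qed.

Lemma g_dvd : g %| 'X^n - 1.
Proof.
have h1 : all (root ('X^n - 1)) (enum Z).
  apply/allP => z; rewrite mem_enum => zZ.
  by rewrite /root !hornerE hZ // subrr.
have h2 : uniq_roots (enum Z) by rewrite uniq_rootsE enum_uniq.
have [q ->] := uniq_roots_prod_XsubC h1 h2.
by rewrite /g /gen_poly -big_enum dvdp_mull.
Qed.

Lemma code_img c :
  @cyclic_code F n Z c <-> exists v : 'rV[F]_k, c = mulg_map n g v.
Proof.
split.
  move=> [h hc].
  have dg : g %| rVpoly c by rewrite hc -(dvdp_mod _ g_dvd) dvdp_mulr.
  exists (poly_rV (rVpoly c %/ g)).
  rewrite /mulg_map poly_rV_K; last first.
    rewrite size_divp ?g_neq0 // size_g /=.
    by rewrite leq_subLR hcard size_rVpoly_le.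
  by rewrite mulrC divpK // rVpolyK.
move=> [v ->]; exists (rVpoly v); rewrite /mulg_map poly_rV_K ?size_gp //.
by rewrite modp_small // size_Xn_sub_1 // ltnS size_gp.
Qed.

Lemma code_dimG : code_dim (@cyclic_code F n Z) k.
Proof.
pose f := linfun (@mulg_map F k n g).
exists (limg f); split.
  move=> c; split.
    by move=> /code_img [v ->]; rewrite -(lfunE (@mulg_map F k n g)) memv_img ?memvf.
  by move=> /memv_imgP [v _ ->]; apply/code_img; exists v; rewrite lfunE.
have /eqP lk : lker f == 0%VS.
  apply/lker0P => u v; rewrite !lfunE /= /mulg_map => /(congr1 rVpoly).
  rewrite !poly_rV_K ?size_gp // => /(mulfI g_neq0).
  move/(congr1 (@poly_rV F k)); rewrite !rVpolyK. done.
rewrite limg_dim_eq; last by rewrite lk capv0.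
by rewrite dimvf dim_matrix mul1r.
Qed.

Lemma code_evalG c :
  @cyclic_code F n Z c <-> forall z, z \in Z -> (rVpoly c).[z] = 0.
Proof.
split.
  move=> /code_img [v ->] z zZ; rewrite /mulg_map poly_rV_K ?size_gp // hornerM.
  have : root g z by rewrite /g /gen_poly -big_enum root_prod_XsubC mem_enum.
  by move/eqP ->; rewrite mul0r.
move=> hc; apply/code_img.
have h1 : all (root (rVpoly c)) (enum Z).
  by apply/allP => z; rewrite mem_enum => zZ; apply/eqP/hc.
have h2 : uniq_roots (enum Z) by rewrite uniq_rootsE enum_uniq.
have [q hq] := uniq_roots_prod_XsubC h1 h2.
exists (poly_rV q).
have sq : (size q <= k)%N.
  case: (eqVneq q 0) => [->|qn0]; first by rewrite size_poly0.
  have := size_rVpoly_le c; rewrite hq size_mul // ?big_enum -/(gen_poly Z) -/g ?g_neq0 //.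
  rewrite size_g -hcard addnS /= => h.
  by rewrite addnC leq_add2l in h.
rewrite /mulg_map poly_rV_K // -[LHS]rVpolyK hq big_enum mulrC.
by [].
Qed.

End GenCode.


Lemma sum_const_range a b' c (P : nat -> bool) :
  (forall j, (a <= j < b')%N -> P j = c) ->
  (\sum_(a <= j < b') (P j : nat) = (b' - a) * c)%N.
Proof.
move=> H; rewrite (eq_big_nat _ _ (F2 := fun _ => nat_of_bool c)).
  by rewrite sum_nat_const_nat.
by move=> j hj; rewrite H.
Qed.

Lemma card_ord_pred N (P : nat -> bool) :
  #|[set j : 'I_N | P j]| = (\sum_(0 <= j < N) (P j : nat))%N.
Proof.
rewrite -sum1_card big_mkcond /= big_mkord; apply: eq_bigr => j _.
by rewrite inE; case: (P j).
Qed.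

Lemma sum_split2N m0 (f : nat -> nat) :
  (\sum_(i < m0.*2) f i = \sum_(a < m0) f (a.*2) + \sum_(a < m0) f (a.*2.+1))%N.
Proof.
elim: m0 => [|m0 IH]; first by rewrite !big_ord0.
rewrite doubleS !big_ord_recr /= IH. by rewrite -!addnA; congr (_ + _)%N; rewrite addnCA.
Qed.

Section Main.
Variables (F : finFieldType) (delta : nat) (alpha : F) (b t : nat).
Local Notation n := (4 * delta + 2)%N.
Local Notation m := (2 * delta + 1)%N.
Hypothesis hd : (2 <= delta)%N.
Hypothesis hprim : n.-primitive_root alpha.
Hypothesis hcop : coprime b n.
Hypothesis ht : (t < n)%N.

Definition beta := alpha ^+ b.
Definition uu := alpha ^+ t.

Definition Aset : {set F} := [set alpha ^+ t; alpha ^+ (t + b);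
                      alpha ^+ (t + (delta + 1) * b); alpha ^+ (t + (2 * delta + 1) * b)].
Definition Bset : {set F} := [set alpha ^+ (i * b) | i : 'I_(delta - 1)].
Definition ABset : {set F} := [set x * y | x in Aset, y in Bset].

Definition Jp j := [|| (j < delta)%N, (delta < j < 2 * delta)%N | (2 * delta < j < 3 * delta)%N].

Lemma prim_beta : n.-primitive_root beta.
Proof. by rewrite prim_root_exp_coprime. Qed.

Lemma betan : beta ^+ n = 1.
Proof. exact: prim_expr_order prim_beta. Qed.

Lemma alphan : alpha ^+ n = 1.
Proof. exact: prim_expr_order hprim. Qed.

Lemma alpha_neq0 : alpha != 0.
Proof.
apply/negP => /eqP a0; have := alphan; rewrite a0 expr0n.
by rewrite addn2 /= => /eqP; rewrite eq_sym oner_eq0.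
Qed.

Lemma beta_neq0 : beta != 0.
Proof. by rewrite /beta expf_neq0 // alpha_neq0. Qed.

Lemma uu_neq0 : uu != 0.
Proof. by rewrite /uu expf_neq0 // alpha_neq0. Qed.

Lemma betam : beta ^+ m = -1.
Proof.
have h2 : (beta ^+ m) ^+ 2 = 1.
  by rewrite -exprM (_ : (m * 2 = n)%N) ?betan //; lia.
have hn1 : beta ^+ m != 1.
  have m0 : (0 < m)%N by lia.
  rewrite -(prim_order_dvd prim_beta); apply/negP => /(dvdn_leq m0); lia.
move/eqP: h2; rewrite -subr_eq0 -[X in _ - X](expr1n _ 2) subr_sqr mulf_eq0 subr_eq0 (negbTE hn1) /=.
by rewrite addr_eq0 => /eqP.
Qed.

Lemma two_neq0 : (2 : F) != 0.
Proof.
apply/negP => /eqP h2.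
have : beta ^+ m = 1.
  by rewrite betam; apply/eqP; rewrite eq_sym -subr_eq0 opprK -mulr2n h2.
have m0 : (0 < m)%N by lia.
by move=> /eqP; rewrite -(prim_order_dvd prim_beta) => /(dvdn_leq m0); lia.
Qed.

Lemma powtb a : alpha ^+ (t + a * b) = uu * beta ^+ a.
Proof. by rewrite exprD /uu /beta -exprM mulnC. Qed.

Lemma memAB_gen a i : alpha ^+ (t + a * b) \in Aset -> (i < delta - 1)%N ->
  uu * beta ^+ (a + i) \in ABset.
Proof.
move=> ha hi; rewrite exprD mulrA -powtb.
apply/imset2P; exists (alpha ^+ (t + a * b)) (beta ^+ i) => //.
by apply/imsetP; exists (Ordinal hi) => //; rewrite /beta -exprM mulnC.
Qed.

Lemma memAB1 j : Jp j -> uu * beta ^+ j \in ABset.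
Proof.
rewrite /Jp => /or3P [h|/andP [h1 h2]|/andP [h1 h2]].
- case: (ltnP j (delta - 1)) => h'.
    rewrite -(add0n j); apply: memAB_gen => //.
    by rewrite mul0n addn0 !inE eqxx.
  rewrite (_ : j = 1 + (delta - 2))%N; last lia.
  apply: memAB_gen; last lia.
  by rewrite mul1n !inE eqxx orbT.
- rewrite (_ : j = (delta + 1) + (j - delta - 1))%N; last lia.
  apply: memAB_gen; last lia.
  by rewrite !inE eqxx !orbT.
- rewrite (_ : j = (2 * delta + 1) + (j - 2 * delta - 1))%N; last lia.
  apply: memAB_gen; last lia.
  by rewrite !inE eqxx !orbT.
Qed.

Lemma memAB2 z : z \in ABset -> exists2 j, Jp j & z = uu * beta ^+ j.
Proof.
case/imset2P => x y hx /imsetP [i _ ->] ->.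
have hi := ltn_ord i.
have ey : alpha ^+ (i * b) = beta ^+ i by rewrite /beta -exprM mulnC.
rewrite ey; move: hx; rewrite !inE => /orP [/orP [/orP [/eqP->|/eqP->]|/eqP->]|/eqP->].
- by exists i; [rewrite /Jp; lia | rewrite /uu].
- by exists (1 + i)%N; [rewrite /Jp; lia | rewrite -(mul1n b) powtb -mulrA -exprD].
- by exists (delta + 1 + i)%N; [rewrite /Jp; lia | rewrite powtb -mulrA -exprD].
- by exists (2 * delta + 1 + i)%N; [rewrite /Jp; lia | rewrite powtb -mulrA -exprD].
Qed.

Lemma ABset_eq : ABset = [set uu * beta ^+ (val j) | j in [set j : 'I_n | Jp j]].
Proof.
apply/setP => z; apply/idP/imsetP.
  move=> /memAB2 [j hj ->].
  have jn : (j < n)%N by move: hj; rewrite /Jp; lia.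
  by exists (Ordinal jn); rewrite ?inE.
by move=> [j]; rewrite inE => hj ->; apply: memAB1.
Qed.

Lemma card_Jset : #|[set j : 'I_n | Jp j]| = (3 * delta - 2)%N.
Proof.
rewrite card_ord_pred.
rewrite (@big_cat_nat _ _ _ (3 * delta)) /=; [|lia|lia].
rewrite (@big_cat_nat _ _ _ (2 * delta + 1)) /=; [|lia|lia].
rewrite (@big_cat_nat _ _ _ (2 * delta)) /=; [|lia|lia].
rewrite (@big_cat_nat _ _ _ (delta + 1)) /=; [|lia|lia].
rewrite (@big_cat_nat _ _ _ delta) /=; [|lia|lia].
rewrite (@sum_const_range _ _ true); last by move=> j hj; rewrite /Jp; lia.
rewrite (@sum_const_range _ _ false); last by move=> j hj; rewrite /Jp; lia.
rewrite (@sum_const_range _ _ true); last by move=> j hj; rewrite /Jp; lia.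
rewrite (@sum_const_range _ _ false); last by move=> j hj; rewrite /Jp; lia.
rewrite (@sum_const_range _ _ true); last by move=> j hj; rewrite /Jp; lia.
rewrite (@sum_const_range _ _ false); last by move=> j hj; rewrite /Jp; lia.
rewrite /=; lia.
Qed.

Lemma card_AB : (#|ABset| + (delta + 4) = n)%N.
Proof.
rewrite ABset_eq card_in_imset ?card_Jset; first lia.
move=> i j _ _ /(mulfI uu_neq0) /eqP.
rewrite (eq_prim_root_expr prim_beta) !modn_small ?ltn_ord // => /eqP.
exact: val_inj.
Qed.

Lemma AB_roots z : z \in ABset -> z ^+ n = 1.
Proof.
move=> /memAB2 [j _ ->]; rewrite exprMn /uu -!exprM mulnC exprM alphan expr1n.
rewrite mul1r (_ : (b * (j * n) = n * (b * j))%N); last by lia.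
by rewrite exprM alphan expr1n.
Qed.


Lemma n_gt0 : (0 < n)%N. Proof. by rewrite addn2. Qed.
Definition o0 : 'I_n := Ordinal n_gt0.
Lemma m_gt0 : (0 < m)%N. Proof. by rewrite addn1. Qed.

Definition gg (c : 'rV[F]_n) i := c ord0 (insubd o0 i).
Definition ww (c : 'rV[F]_n) r (a : 'I_m) := gg c (a.*2 + r)%N * uu ^+ (a.*2 + r)%N.
Definition xx r (a : 'I_m) := beta ^+ (a.*2 + r)%N.
Definition PP c r j := \sum_(a < m) ww c r a * xx r a ^+ j.
Definition Zc (c : 'rV[F]_n) := forall z, z \in ABset -> (rVpoly c).[z] = 0.

Lemma nm2 : n = m.*2. Proof. lia. Qed.

Lemma ev_gen c z : (rVpoly c).[z] =
  \sum_(a < m) gg c (a.*2 + 0) * z ^+ (a.*2 + 0) +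
  \sum_(a < m) gg c (a.*2 + 1) * z ^+ (a.*2 + 1).
Proof.
rewrite horner_rVpoly_sum.
transitivity (\sum_(i < n) gg c i * z ^+ i).
  by apply: eq_bigr => i _; rewrite /gg valKd.
rewrite nm2 (sum_split2 _ (fun i => gg c i * z ^+ i)); congr (_ + _); apply: eq_bigr => a _.
  by rewrite addn0.
by rewrite [(a.*2 + 1)%N]addn1.
Qed.

Lemma term_eq k e : (uu * beta ^+ k) ^+ e = uu ^+ e * (beta ^+ e) ^+ k.
Proof. by rewrite exprMn -!exprM (mulnC k). Qed.

Lemma neg1_even a r : (-1 : F) ^+ (a.*2 + r)%N = (-1) ^+ r.
Proof. by rewrite exprD -mul2n exprM sqrrN !expr1n mul1r. Qed.

Lemma ev_split c j : (rVpoly c).[uu * beta ^+ j] = PP c 0 j + PP c 1 j.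
Proof.
rewrite ev_gen /PP; congr (_ + _); apply: eq_bigr => a _;
  by rewrite term_eq mulrA.
Qed.

Lemma ev_split2 c j : (rVpoly c).[uu * beta ^+ (j + m)] = PP c 0 j - PP c 1 j.
Proof.
rewrite ev_gen /PP -sumrN; congr (_ + _); apply: eq_bigr => a _;
  rewrite [beta ^+ (j + m)]exprD betam mulrA exprMn term_eq neg1_even /ww /xx ?expr0 ?expr1.
  by rewrite mulr1 mulrA.
by rewrite mulrN1 mulrN mulrA.
Qed.

Lemma local_zero c : Zc c -> forall j, (j < delta - 1)%N ->
  PP c 0 j = 0 /\ PP c 1 j = 0.
Proof.
move=> hc j hj.
have h1 : Jp j by rewrite /Jp; lia.
have h2 : Jp (j + m) by rewrite /Jp; lia.
have e1 := hc _ (memAB1 h1).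
have e2 := hc _ (memAB1 h2).
rewrite ev_split in e1; rewrite ev_split2 in e2.
move/eqP: e2; rewrite subr_eq0 => /eqP e2.
rewrite -e2 in e1 *.
have : 2 * PP c 0 j = 0 by rewrite mulr_natl mulr2n.
by move/eqP; rewrite mulf_eq0 (negbTE two_neq0) /= => /eqP.
Qed.

Lemma xx_inj r : (r <= 1)%N -> injective (xx r).
Proof.
move=> hr a a' /eqP; rewrite /xx (eq_prim_root_expr prim_beta).
have ha := ltn_ord a; have ha' := ltn_ord a'.
rewrite !modn_small; [|lia|lia] => /eqP h; apply: ord_inj; lia.
Qed.

Lemma ww_neq0 c r a : (ww c r a != 0) = (gg c (a.*2 + r)%N != 0).
Proof. by rewrite /ww mulf_eq0 negb_or expf_neq0 ?uu_neq0 ?andbT. Qed.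

Lemma local_card c r a0 : Zc c -> (r <= 1)%N -> ww c r a0 != 0 ->
  (delta <= #|[set a | ww c r a != 0%R]|)%N.
Proof.
move=> hc hr h0.
suff : (delta - 1 < #|[set a | ww c r a != 0%R]|)%N by lia.
apply: (@BCHk F _ (xx r) (ww c r) (delta - 1) a0) => //.
  by move=> x y _ _; apply: xx_inj.
move=> l hl; have [e0 e1] := local_zero hc hl.
by have [->|->] : r = 0%N \/ r = 1%N by lia.
Qed.

Definition yy r (a : 'I_m) := beta ^+ ((a.*2 + r)%N * (delta + 1)).

Lemma yy_sq r a : yy r a ^+ 2 = xx r a * (-1) ^+ r.
Proof.
rewrite /yy -exprM (_ : ((a.*2 + r)%N * (delta + 1) * 2 = (a.*2 + r)%N + m * (a.*2 + r)%N)%N);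
  last lia.
by rewrite exprD exprM betam neg1_even.
Qed.

Lemma yy_pow r a l q j : ((delta + 1) * l = q * m + j)%N ->
  yy r a ^+ l = xx r a ^+ j * ((-1) ^+ r) ^+ q.
Proof.
move=> e.
have E : ((a.*2 + r)%N * (delta + 1) * l = (a.*2 + r)%N * j + m * q * (a.*2 + r)%N)%N.
  by rewrite -mulnA e; lia.
rewrite /yy -exprM E exprD; congr (_ * _); first by rewrite /xx exprM.
by rewrite !exprM betam -exprM mulnC exprM neg1_even.
Qed.

Lemma glob_card c r a0 : Zc c -> (r <= 1)%N -> (forall a, ww c (1 - r) a = 0) ->
  ww c r a0 != 0 -> (2 * delta <= #|[set a | ww c r a != 0%R]|)%N.
Proof.
move=> hc hr hz h0.
have hP : forall j, Jp j -> PP c r j = 0.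
  move=> j hj; have := hc _ (memAB1 hj); rewrite ev_split.
  have e : PP c (1 - r) j = 0 by rewrite /PP big1 // => a _; rewrite hz mul0r.
  have [er|er] : r = 0%N \/ r = 1%N by lia.
    by rewrite er subn0 in e *; rewrite e addr0.
  by rewrite er subnn in e *; rewrite e add0r.
suff : (2 * delta - 1 < #|[set a | ww c r a != 0%R]|)%N by lia.
apply: (@BCHk F _ (yy r) (ww c r) (2 * delta - 1) a0) => //.
  move=> x y _ _ /(congr1 (fun z => z ^+ 2)); rewrite !yy_sq => /mulIf h.
  apply: (xx_inj hr); apply: h; by rewrite expf_neq0 // oppr_eq0 oner_eq0.
move=> l hl.
have [q [j [e hj]]] : exists q j, ((delta + 1) * l = q * m + j)%N /\ Jp j.
  have := odd_double_half l; case: (odd l) => /= hl2.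
    exists l./2, (l./2 + (delta + 1))%N; split; [lia | rewrite /Jp; lia].
  exists l./2, l./2; split; [lia | rewrite /Jp; lia].
under eq_bigr => a _ do rewrite (yy_pow _ _ e) mulrA.
by rewrite -mulr_suml -/(PP c r j) hP // mul0r.
Qed.

Lemma card_sum (N : nat) (P : 'I_N -> bool) :
  #|[set a | P a]| = (\sum_(a < N) (P a : nat))%N.
Proof.
by rewrite -sum1_card big_mkcond /=; apply: eq_bigr => a _; rewrite inE; case: (P a).
Qed.

Lemma wt_split c : wt c =
  (#|[set a | ww c 0 a != 0%R]| + #|[set a | ww c 1 a != 0%R]|)%N.
Proof.
rewrite /wt card_sum !card_sum.
transitivity (\sum_(i < n) (gg c i != 0%R : nat))%N.
  by apply: eq_bigr => i _; rewrite /gg valKd.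
rewrite nm2 (sum_split2N _ (fun i => (gg c i != 0%R : nat))).
congr (_ + _)%N; apply: eq_bigr => a _; rewrite ww_neq0.
  by rewrite addn0.
by rewrite [(a.*2 + 1)%N]addn1.
Qed.

Definition Sloc r : {set 'I_n} := [set insubd o0 (a.*2 + r)%N | a : 'I_m].

Lemma val_loc r (a : 'I_m) : (r <= 1)%N -> val (insubd o0 (a.*2 + r)%N : 'I_n) = (a.*2 + r)%N.
Proof.
move=> hr; have h : (a.*2 + r < n)%N by have := ltn_ord a; lia.
by rewrite val_insubd h.
Qed.

Lemma nat_loc r (a : 'I_m) : (r <= 1)%N -> nat_of_ord (insubd o0 (a.*2 + r)%N : 'I_n) = (a.*2 + r)%N.
Proof. exact: val_loc. Qed.

Lemma loc_main (C : 'rV[F]_n -> Prop) : (forall c, C c -> Zc c) ->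
  forall i, has_locality C (delta + 2) delta i.
Proof.
move=> hC i.
have hr : (odd i <= 1)%N by case: (odd i).
exists (Sloc (odd i)); split.
- have hi2 : (i./2 < m)%N by have := ltn_ord i; have := odd_double_half i; lia.
  apply/imsetP; exists (Ordinal hi2) => //; apply: ord_inj.
  rewrite val_loc //=; have := odd_double_half i; lia.
- by apply: leq_trans (leq_imset_card _ _) _; rewrite card_ord; lia.
move=> c /hC hc /existsP [j /andP [/imsetP [a _ ->] cj]].
have wa : ww c (odd i) a != 0 by rewrite ww_neq0.
apply: leq_trans (local_card hc hr wa) _.
rewrite -(@card_in_imset _ _ (fun a : 'I_m => insubd o0 (a.*2 + odd i)%N : 'I_n)).
  apply: subset_leq_card; apply/subsetP => k /imsetP [a' ha' ->].
  rewrite inE; apply/andP; split; first by apply/imsetP; exists a'.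
  by move: ha'; rewrite inE ww_neq0.
move=> x y _ _ /(congr1 val); rewrite !val_loc // => h; apply: ord_inj; lia.
Qed.

Lemma mind_low c : Zc c -> c != 0 -> (2 * delta <= wt c)%N.
Proof.
move=> hc cn0.
have [i ci] : exists i, c ord0 i != 0.
  case: (pickP (fun i => c ord0 i != 0)) => [i ci|h]; first by exists i.
  move/eqP: cn0; case; apply/rowP => j; rewrite mxE.
  by move: (h j) => /negbFE /eqP.
have hi2 : (i./2 < m)%N by have := ltn_ord i; have := odd_double_half i; lia.
pose a := Ordinal hi2.
have hr : (odd i <= 1)%N by case: (odd i).
have wa : ww c (odd i) a != 0.
  rewrite ww_neq0 /gg /= (_ : insubd o0 _ = i) //; apply: ord_inj.
  rewrite val_insubd; have := ltn_ord i; have := odd_double_half i.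
  move=> h1 h2; have h3 : (i./2.*2 + odd i < n)%N by lia.
  by rewrite h3; lia.
rewrite wt_split.
case: (pickP (fun a => ww c (1 - odd i) a != 0)) => [a' h'|hz].
  have h1 := local_card hc hr wa.
  have h2 := @local_card c (1 - odd i) a' hc (leq_subr _ _) h'.
  by move: h1 h2; case: (odd i) => /=; rewrite ?subn0 ?subnn; lia.
have hz' : forall a, ww c (1 - odd i) a = 0 by move=> x; move: (hz x) => /negbFE /eqP.
have := glob_card hc hr hz' wa.
by case: (odd i) => /=; rewrite ?subn0 ?subnn; lia.
Qed.

Definition vv := alpha ^+ (n - t).
Definition cw : 'rV[F]_n :=
  \row_(i < n) (if odd i then 0 else (beta ^+ (i * (delta + 1)) - beta ^+ i) * vv ^+ i).

Lemma vvuu : vv * uu = 1.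
Proof. by rewrite /vv /uu -exprD subnK ?alphan // ltnW. Qed.

Lemma gg_cw (a : 'I_m) r : (r <= 1)%N -> gg cw (a.*2 + r)%N =
  if odd (a.*2 + r)%N then 0 else
  (beta ^+ ((a.*2 + r)%N * (delta + 1)) - beta ^+ (a.*2 + r)%N) * vv ^+ (a.*2 + r)%N.
Proof. by move=> hr; rewrite /gg /cw mxE nat_loc. Qed.

Lemma ww_cw1 a : ww cw 1 a = 0.
Proof. by rewrite /ww gg_cw // oddD odd_double /= mul0r. Qed.

Lemma ww_cw0 a : ww cw 0 a = beta ^+ (a.*2 * (delta + 1)) - beta ^+ a.*2.
Proof.
rewrite /ww gg_cw // oddD odd_double /= addn0 -mulrA -exprMn vvuu expr1n.
by rewrite mulr1.
Qed.

Lemma nodvd x : (0 < x < 2 * n)%N -> x != n -> ~~ (n %| x)%N.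
Proof.
move=> h1 h2; apply/negP => /dvdnP [k hk].
by destruct k as [|[|k]]; lia.
Qed.

Lemma geo e : ~~ (n %| e.*2)%N -> \sum_(a < m) (beta ^+ e.*2) ^+ a = 0.
Proof.
move=> hn.
have h1 : (beta ^+ e.*2) ^+ m = 1.
  by rewrite -exprM (_ : (e.*2 * m = n * e)%N) ?exprM ?betan ?expr1n //; lia.
have h2 : beta ^+ e.*2 - 1 != 0.
  by rewrite subr_eq0 -(prim_order_dvd prim_beta).
have := subrX1 (beta ^+ e.*2) m; rewrite h1 subrr => /esym /eqP.
by rewrite mulf_eq0 (negbTE h2) => /eqP.
Qed.

Lemma Zc_cw : Zc cw.
Proof.
move=> z /memAB2 [j hj ->]; rewrite ev_split.
rewrite {2}/PP big1 ?addr0; last by move=> a _; rewrite ww_cw1 mul0r.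
rewrite /PP.
transitivity (\sum_(a < m) ((beta ^+ (delta + 1 + j).*2) ^+ a - (beta ^+ (1 + j).*2) ^+ a)).
  apply: eq_bigr => a _; rewrite ww_cw0 /xx addn0 mulrBl -!exprM -!exprD.
  by congr (_ - _); congr (_ ^+ _); lia.
rewrite sumrB !geo ?subrr //; apply: nodvd; move: hj; rewrite /Jp; lia.
Qed.

Lemma coprime_m : coprime m delta.
Proof. by rewrite /coprime gcdnC gcdnMDl gcdn1. Qed.

Lemma wt_cw : wt cw = (2 * delta)%N.
Proof.
rewrite wt_split.
rewrite (_ : [set a | ww cw 1 a != 0%R] = set0); last first.
  by apply/setP => a; rewrite !inE ww_cw1 eqxx.
rewrite (_ : [set a | ww cw 0 a != 0%R] = [set~ Ordinal m_gt0]).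
  by rewrite cards0 cardsC1 card_ord; lia.
apply/setP => a; rewrite !inE ww_cw0 subr_eq0 (eq_prim_root_expr prim_beta).
rewrite eqn_mod_dvd; last by lia.
rewrite (_ : (a.*2 * (delta + 1) - a.*2 = 2 * (a * delta))%N); last by lia.
rewrite (_ : n = (2 * m)%N); last by lia.
rewrite dvdn_pmul2l // Gauss_dvdl ?coprime_m //.
have ha := ltn_ord a.
have e : (m %| a)%N = (a == Ordinal m_gt0).
  apply/idP/eqP => [h|->]; last by rewrite dvdn0.
  apply: ord_inj => /=; case: (posnP a) => // ap; have := dvdn_leq ap h; lia.
by rewrite e.
Qed.

Lemma main_sec : let C := @cyclic_code F n ABset in
  [/\ code_dim C (delta + 4), min_dist C (2 * delta),
      is_LRC C (delta + 2) delta &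
      LRC_optimal_params n (delta + 4) (2 * delta) (delta + 2) delta].
Proof.
move=> C.
have hZ := AB_roots.
have hc := card_AB.
have hC : forall c, C c <-> Zc c.
  by move=> c; rewrite /C; apply: (code_evalG hZ hc n_gt0).
split.
- exact: (code_dimG hZ hc n_gt0).
- split.
    exists cw; split; first by apply/hC; exact: Zc_cw.
      apply/negP => /eqP e; have := wt_cw; rewrite e /wt.
      rewrite (_ : [set i | _] = set0) ?cards0; first lia.
      by apply/setP => i; rewrite !inE mxE eqxx.
    exact: wt_cw.
  by move=> c /hC hcz cn0; apply: mind_low.
- by move=> i; apply: loc_main => c /hC.
rewrite /LRC_optimal_params.
rewrite (_ : (delta + 4 + (delta + 2) - 1 = 2 * (delta + 2) + 1)%N); last lia.
have -> : ((2 * (delta + 2) + 1) %/ (delta + 2) = 2)%N.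
  rewrite divnMDl; last lia.
  rewrite divn_small; lia.
lia.
Qed.

End Main.

Theorem proposition4p9 (F : finFieldType) (delta : nat) (alpha : F) (b t : nat) :
  (2 <= delta)%N ->
  (4 * delta + 2 %| #|F| - 1)%N ->
  (4 * delta + 2)%N.-primitive_root alpha ->
  (0 < b)%N -> coprime b (4 * delta + 2) ->
  (t < 4 * delta + 2)%N ->
  let A : {set F} := [set alpha ^+ t; alpha ^+ (t + b);
                      alpha ^+ (t + (delta + 1) * b); alpha ^+ (t + (2 * delta + 1) * b)] in
  let B : {set F} := [set alpha ^+ (i * b) | i : 'I_(delta - 1)] in
  let AB : {set F} := [set x * y | x in A, y in B] in
  let C := @cyclic_code F (4 * delta + 2) AB in
  [/\ code_dim C (delta + 4), min_dist C (2 * delta),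
      is_LRC C (delta + 2) delta &
      LRC_optimal_params (4 * delta + 2) (delta + 4) (2 * delta) (delta + 2) delta].
Proof.
move=> hd _ hprim _ hcop ht.
exact: (main_sec hd hprim hcop ht).
Qed.
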